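(* Let $n\ge 1$ and let $\delta, s$ be nonnegative integers with $s \le s_{\mathrm{lim}} := n-\delta-1$. Let $A \in \mathbb{R}^{n\times n}$ be symmetric, and suppose there is a permutation matrix $\Pi\in\mathcal{P}_n$ such that $\Pi A \Pi^T \in \mathcal{M}_n(\delta,s)$. Then: (i) $\Pi$, together with some $S\in\mathcal{R}^n$, is an optimal solution of the Robust Seriation problem with the entrywise $\ell_1$ norm, $$\min_{\Pi'\in\mathcal{P}_n,\; S\in\mathcal{R}^n} \; \sum_{i,j=1}^n \big|S_{ij} - (\Pi' A \Pi'^T)_{ij}\big|;$$ (ii) the ordering given by $\Pi$ is an optimal solution of the problem R2SUM($\lambda$) with $\lambda=\delta^2$, $$\min_{x\in\mathcal{P}_n} \; \sum_{i,j=1}^n A_{ij}\,\min\big(\lambda,\; |x_i-x_j|^2\big),$$ where the ordering given by $\Pi$ is the permutation vector $x$ with $x_{\pi(k)}=k$ for all $k$ (element $\pi(k)$ is placed at position $k$), $\pi$ being the permutation with $\Pi_{ij}=1$ iff $\pi(i)=j$.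
   Context: $\mathcal{P}_n$ denotes the set of permutations of $\{1,\dots,n\}$, represented either as permutation vectors $x\in\mathbb{R}^n$ (a rearrangement of $(1,\dots,n)$) or as permutation matrices $\Pi\in\{0,1\}^{n\times n}$ with $\Pi_{ij}=1$ iff $\pi(i)=j$; then $(\Pi A\Pi^T)_{ij}=A_{\pi(i)\pi(j)}$. A matrix $S\in\mathbb{R}^{n\times n}$ is a strong-R-matrix (strong Robinson matrix) if it is symmetric and $S_{ij}\le S_{kl}$ for all $(i,j,k,l)$ with $|i-j|\ge|k-l|$; $\mathcal{R}^n$ denotes the set of such matrices. $\mathcal{M}_n(\delta,s)$ is the set of symmetric matrices $M\in\{0,1\}^{n\times n}$ such that $M_{ij}=1$ for all $(i,j)$ with $|i-j|\le\delta$ and the number of nonzero entries of $M$ equals $\big(n+(2n-1)\delta-\delta^2\big)+s$ (i.e. a full band of half-width $\delta$ plus $s$ additional out-of-band ones). *)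

(* Defs.v *)
From mathcomp Require Import all_boot all_order all_algebra all_fingroup.
Set Implicit Arguments. Unset Strict Implicit. Unset Printing Implicit Defensive.
Import Order.TTheory GRing.Theory Num.Theory.
Local Open Scope ring_scope.

Definition distn (i j : nat) : nat := (i - j + (j - i))%N.

(* Pi A Pi^T for the permutation matrix Pi of p (Pi_{ij} = 1 iff p i = j) *)
Definition conjperm (R : ringType) (n : nat) (p : 'S_n) (A : 'M[R]_n) : 'M[R]_n :=
  perm_mx p *m A *m (perm_mx p)^T.

Definition strongR (R : realFieldType) (n : nat) (S : 'M[R]_n) : Prop :=
  S^T = S /\
  forall i j k l : 'I_n, (distn k l <= distn i j)%N -> S i j <= S k l.

Definition Mset (R : realFieldType) (n delta s : nat) (M : 'M[R]_n) : Prop :=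
  [/\ M^T = M,
      (forall i j : 'I_n, M i j = 0 \/ M i j = 1),
      (forall i j : 'I_n, (distn i j <= delta)%N -> M i j = 1) &
      #|[set ij : 'I_n * 'I_n | M ij.1 ij.2 != 0]|
        = (n + (2 * n - 1) * delta - delta ^ 2 + s)%N].

Definition rs_obj (R : realFieldType) (n : nat) (A : 'M[R]_n) (p : 'S_n) (S : 'M[R]_n) : R :=
  \sum_(i < n) \sum_(j < n) `|S i j - conjperm p A i j|.

Definition pvec (R : ringType) (n : nat) (sigma : 'S_n) (i : 'I_n) : R := ((sigma i).+1)%:R.

Definition r2sum_obj (R : realFieldType) (n : nat) (A : 'M[R]_n) (lambda : R) (sigma : 'S_n) : R :=
  \sum_(i < n) \sum_(j < n) A i j * Order.min lambda ((pvec R sigma i - pvec R sigma j) ^+ 2).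

(* Main.v *)
Require Import Defs.
From mathcomp Require Import all_boot all_order all_algebra all_fingroup.
From mathcomp Require Import zify ring.
Import Order.TTheory GRing.Theory Num.Theory.
Local Open Scope ring_scope.
Set Implicit Arguments. Unset Strict Implicit. Unset Printing Implicit Defensive.

Lemma conjpermE (R : ringType) n (p : 'S_n) (A : 'M[R]_n) i j :
  conjperm p A i j = A (p i) (p j).
Proof. by rewrite /conjperm tr_perm_mx -row_permE -col_permE !mxE. Qed.

Definition ones (R : ringType) n (M : 'M[R]_n) : {set 'I_n * 'I_n} :=
  [set x | M x.1 x.2 != 0].
Definition band n d : {set 'I_n * 'I_n} := [set x : 'I_n * 'I_n | (distn x.1 x.2 <= d)%N].

Lemma card_ones_conj (R : ringType) n (q : 'S_n) (M : 'M[R]_n) :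
  #|ones (conjperm q M)| = #|ones M|.
Proof.
have -> : ones (conjperm q M) = [set ((q^-1)%g x.1, (q^-1)%g x.2) | x in ones M].
  apply/setP => -[i j]; rewrite !inE conjpermE; apply/idP/imsetP.
  - by move=> H; exists (q i, q j); rewrite ?inE //= !permK.
  - by case=> -[a b] /=; rewrite inE => H [-> ->]; rewrite !permKV.
apply: card_imset => -[a b] [c d] /= [] /perm_inj -> /perm_inj -> //.
Qed.

Lemma sum_ind (R : numDomainType) (T : finType) (S : {set T}) :
  \sum_x ((x \in S)%:R : R) = #|S|%:R.
Proof.
transitivity (\sum_(x in S) (1:R)); last by rewrite sumr_const.
by rewrite [RHS]big_mkcond; apply: eq_bigr => x _; case: (x \in S).
Qed.

Lemma sum01 (R : realFieldType) n (M : 'M[R]_n) :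
  (forall i j, M i j = 0 \/ M i j = 1) ->
  \sum_i \sum_j M i j = #|ones M|%:R.
Proof.
move=> H; rewrite pair_big /= -sum_ind; apply: eq_bigr => -[i j] _.
by rewrite inE /=; case: (H i j) => ->; rewrite ?eqxx ?oner_eq0.
Qed.

Lemma card_band n d : (d < n)%N -> (n + (2*n-1)*d - d^2 <= #|band n d|)%N.
Proof.
elim: d => [|d IH] Hd.
  have -> : (n + (2*n-1)*0 - 0^2 = n)%N by lia.
  have E : #|[set (i, i) | i : 'I_n]| = n.
    by rewrite card_imset ?card_ord // => i j [].
  by rewrite -{1}E; apply: subset_leq_card; apply/subsetP => x /imsetP [i _ ->]; rewrite inE /= /distn; lia.
have IH' := IH (ltnW Hd); clear IH.
have lt1 : forall i : 'I_(n - d.+1), (i + d.+1 < n)%N.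
  by move=> i; have := ltn_ord i; lia.
have lt2 : forall i : 'I_(n - d.+1), (i < n)%N.
  by move=> i; have := ltn_ord i; lia.
pose L : {set 'I_n * 'I_n} := [set x : 'I_n * 'I_n | val x.1 == (x.2 + d.+1)%N].
pose U : {set 'I_n * 'I_n} := [set x : 'I_n * 'I_n | val x.2 == (x.1 + d.+1)%N].
have cL : (n - d.+1 <= #|L|)%N.
  have E : #|[set (Ordinal (lt1 i), Ordinal (lt2 i)) | i : 'I_(n - d.+1)]| = (n - d.+1)%N.
    by rewrite card_imset ?card_ord // => i j /(congr1 (fun x => val x.2)) /= /ord_inj.
  by rewrite -{1}E; apply: subset_leq_card; apply/subsetP => x /imsetP [i _ ->]; rewrite inE /=.

have cU : (n - d.+1 <= #|U|)%N.
  have E2 : #|[set (Ordinal (lt2 i), Ordinal (lt1 i)) | i : 'I_(n - d.+1)]| = (n - d.+1)%N.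
    by rewrite card_imset ?card_ord // => i j /(congr1 (fun x => val x.1)) /= /ord_inj.
  by rewrite -{1}E2; apply: subset_leq_card; apply/subsetP => x /imsetP [i _ ->]; rewrite inE /=.

have sub : band n d :|: L :|: U \subset band n d.+1.
  apply/subsetP => -[i j]; rewrite !inE /= /distn => /orP [/orP [|] |] /=; lia.
have := subset_leq_card sub.
rewrite cardsU setIUl cardsU.
have -> : band n d :&: L = set0.
  apply/setP => -[i j]; rewrite !inE /= /distn; apply/negP; lia.
have -> : L :&: U = set0.
  apply/setP => -[i j]; rewrite !inE /=; apply/negP; lia.
have -> : band n d :&: U = set0.
  apply/setP => -[i j]; rewrite !inE /= /distn; apply/negP; lia.
rewrite setU0 !cards0 !subn0 => H.
nia.
Qed.

Lemma sqr_dist (R : realFieldType) (a b : nat) :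
  ((a.+1)%:R - (b.+1)%:R : R) ^+ 2 = ((distn a b)^2)%:R.
Proof.
rewrite natrX /distn; case: (leqP a b) => h.
  have -> : (a - b = 0)%N by lia.
  rewrite add0n (natrB _ h) -sqrrN; congr (_ ^+ 2).
  by rewrite -!natr1; ring.
have -> : (b - a = 0)%N by lia.
rewrite addn0 (natrB _ (ltnW h)); congr (_ ^+ 2).
by rewrite -!natr1; ring.
Qed.

Lemma r2_reindex (R : realFieldType) n (A : 'M[R]_n) lam (sigma : 'S_n) :
  r2sum_obj A lam sigma =
  \sum_i \sum_j conjperm (sigma^-1)%g A i j * Order.min lam (((distn i j)^2)%:R).
Proof.
rewrite /r2sum_obj (reindex_inj (@perm_inj _ (sigma^-1)%g)) /=.
apply: eq_bigr => i _; rewrite (reindex_inj (@perm_inj _ (sigma^-1)%g)) /=.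
by apply: eq_bigr => j _; rewrite conjpermE /pvec !permKV sqr_dist.
Qed.

Lemma part2 (R : realFieldType) n (B C : 'M[R]_n) delta :
  (forall i j, B i j = 0 \/ B i j = 1) -> (forall i j, C i j = 0 \/ C i j = 1) ->
  (forall i j : 'I_n, (distn i j <= delta)%N -> B i j = 1) ->
  #|ones C| = #|ones B| ->
  \sum_i \sum_j B i j * Order.min (delta^2)%:R (((distn i j)^2)%:R) <=
  \sum_i \sum_j C i j * Order.min (delta^2)%:R (((distn i j)^2)%:R).
Proof.
move=> HB HC Hband Hc.
have E : \sum_i \sum_j (delta^2)%:R * (C i j - B i j) = 0 :> R.
  under eq_bigr => i _ do rewrite -mulr_sumr sumrB.
  by rewrite -mulr_sumr sumrB (sum01 HB) (sum01 HC) Hc subrr mulr0.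
rewrite -[X in X <= _]addr0 -[X in _ + X <= _]E.
rewrite -big_split /=; apply: ler_sum => i _.
rewrite -big_split /=; apply: ler_sum => j _.
have gle : Order.min (delta^2)%:R (((distn i j)^2)%:R) <= (delta^2)%:R :> R.
  by rewrite ge_min lexx.
case: (HB i j) => hb; case: (HC i j) => hc; rewrite hb hc.
- by rewrite !mul0r !subrr mulr0 addr0.
- rewrite mul0r mul1r subr0 mulr1 add0r min_l //.
  rewrite ler_nat; case: (leqP (distn i j) delta) => h.
    by move: hb; rewrite Hband // => /eqP; rewrite oner_eq0.
  by rewrite leq_exp2r // ltnW.
- by rewrite mul0r mul1r sub0r mulrN1 subr_le0.
- by rewrite !subrr mulr0 addr0.
Qed.

Definition Sband (R : realFieldType) n delta : 'M[R]_n :=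
  \matrix_(i, j) ((distn i j <= delta)%N)%:R.

Lemma strongR_Sband (R : realFieldType) n delta : strongR (Sband R n delta).
Proof.
split.
  by apply/matrixP => i j; rewrite !mxE /distn addnC.
move=> i j k l h; rewrite !mxE; case: (leqP (distn i j) delta) => h2.
  by rewrite (leq_trans h h2).
by rewrite ler0n.
Qed.

Lemma rs_S (R : realFieldType) n delta (A : 'M[R]_n) (p : 'S_n) :
  (forall i j, conjperm p A i j = 0 \/ conjperm p A i j = 1) ->
  (forall i j : 'I_n, (distn i j <= delta)%N -> conjperm p A i j = 1) ->
  rs_obj A p (Sband R n delta) = #|ones (conjperm p A) :\: band n delta|%:R.
Proof.
move=> HB Hband; rewrite /rs_obj pair_big /= -sum_ind; apply: eq_bigr => -[i j] _ /=.
move: (HB i j) (Hband i j); set b := conjperm p A i j => HBij Hbij.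
rewrite !mxE !inE /=; case: leqP => h.
  by rewrite Hbij // subrr normr0.
rewrite sub0r normrN; case: HBij => hb; rewrite hb; rewrite /b in hb; rewrite hb ?normr0 ?normr1 ?eqxx ?oner_eq0 //.
Qed.

Lemma rs_lower (R : realFieldType) n delta (S B : 'M[R]_n) (x0 : 'I_n * 'I_n) :
  strongR S -> distn x0.1 x0.2 = delta.+1 ->
  (forall i j, B i j = 0 \/ B i j = 1) ->
  #|ones B :\: band n delta|%:R * Num.max 0 (1 - S x0.1 x0.2) +
  #|band n delta.+1 :\: ones B|%:R * Num.max 0 (S x0.1 x0.2)
  <= \sum_i \sum_j `|S i j - B i j|.
Proof.
move=> [_ HS] hx0 HB.
rewrite -!sum_ind !mulr_suml -big_split pair_big /=; apply: ler_sum => -[i j] _ /=.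
rewrite !inE /=; case: (HB i j) => ->; rewrite ?eqxx ?oner_eq0 /=.
  case: (leqP (distn i j) delta.+1) => h; rewrite /= ?andbF ?andbT ?mulr1n ?mulr0n ?mul0r ?mul1r ?add0r ?addr0 //.
  rewrite ge_max normr_ge0 /= subr0.
  apply: le_trans (ler_norm _); apply: HS; rewrite hx0 //.
case: (leqP (distn i j) delta) => h; rewrite /= ?andbF ?andbT ?mulr1n ?mulr0n ?mul0r ?mul1r ?add0r ?addr0 //.
rewrite ge_max normr_ge0 /= distrC.
apply: le_trans (ler_norm _); rewrite lerD2l lerN2; apply: HS; rewrite hx0 //.
Qed.

Theorem proposition1 (R : realFieldType) (n delta s : nat) (A : 'M[R]_n) (p : 'S_n) :
  (1 <= n)%N ->
  (s + delta + 1 <= n)%N ->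
  A^T = A ->
  Mset delta s (conjperm p A) ->
  (exists S : 'M[R]_n, strongR S /\
     forall (p' : 'S_n) (S' : 'M[R]_n), strongR S' -> rs_obj A p S <= rs_obj A p' S')
  /\
  (forall sigma : 'S_n,
     r2sum_obj A (delta ^ 2)%:R (p^-1)%g <= r2sum_obj A (delta ^ 2)%:R sigma).
Proof.
move=> n1 hs AT [BT B01 Bband Bcard].
have A01 : forall q : 'S_n, forall i j, conjperm q A i j = 0 \/ conjperm q A i j = 1.
  move=> q i j; rewrite conjpermE.
  by have := B01 ((p^-1)%g (q i)) ((p^-1)%g (q j)); rewrite conjpermE !permKV.
have Ccard : forall q : 'S_n, #|ones (conjperm q A)| = #|ones (conjperm p A)|.
  by move=> q; rewrite !card_ones_conj.
have hd : (delta < n)%N by lia.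
have Kb := card_band hd.
have bsub : band n delta \subset ones (conjperm p A).
  by apply/subsetP => -[i j]; rewrite !inE /= => h; rewrite Bband // oner_eq0.
have Bc : #|ones (conjperm p A)| = (n + (2 * n - 1) * delta - delta ^ 2 + s)%N := Bcard.
have s'eq : #|ones (conjperm p A) :\: band n delta| =
            (#|ones (conjperm p A)| - #|band n delta|)%N.
  by have := cardsID (band n delta) (ones (conjperm p A)); rewrite (setIidPr bsub); lia.
split.
  exists (Sband R n delta); split; first exact: strongR_Sband.
  move=> p' S' HS'; rewrite (rs_S (A01 p) (fun i j h => Bband i j h)).
  case: (ltnP delta.+1 n) => hd1.
    pose x0 : 'I_n * 'I_n := (Ordinal hd1, Ordinal n1).
    have hx0 : distn x0.1 x0.2 = delta.+1 by rewrite /distn /=; lia.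
    apply: le_trans (@rs_lower R n delta S' (conjperm p' A) x0 HS' hx0 (A01 p')).
    set s' := #|ones (conjperm p A) :\: band n delta|.
    set c1 := #|ones (conjperm p' A) :\: band n delta|.
    set c2 := #|band n delta.+1 :\: ones (conjperm p' A)|.
    have c1ge : (s' <= c1)%N.
      have := cardsID (band n delta) (ones (conjperm p' A)).
      have := subset_leq_card (subsetIr (ones (conjperm p' A)) (band n delta)).
      rewrite Ccard /s' /c1; lia.
    have c2ge : (s' <= c2)%N.
      have := cardsID (ones (conjperm p' A)) (band n delta.+1).
      have := subset_leq_card (subsetIr (band n delta.+1) (ones (conjperm p' A))).
      have := card_band hd1.
      rewrite Ccard /s' /c2 s'eq Bc => h1 h2 h3.
      nia.
    set t := S' x0.1 x0.2.
    have g1ge : 0 <= Num.max 0 (1 - t) by rewrite le_max lexx.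
    have g2ge : 0 <= Num.max 0 t by rewrite le_max lexx.
    have g12 : 1 <= Num.max 0 (1 - t) + Num.max 0 t.
      apply: le_trans (_ : (1 - t) + t <= _); first by rewrite subrK.
      by apply: lerD; rewrite le_max lexx orbT.
    apply: le_trans (_ : s'%:R * (Num.max 0 (1 - t) + Num.max 0 t) <= _).
      by rewrite -{1}[s'%:R]mulr1; apply: ler_wpM2l; rewrite ?ler0n.
    by rewrite mulrDr; apply: lerD; apply: ler_wpM2r; rewrite // ler_nat.
  have -> : #|ones (conjperm p A) :\: band n delta| = 0%N.
    by rewrite s'eq Bc; lia.
  by apply: sumr_ge0 => i _; apply: sumr_ge0 => j _; apply: normr_ge0.
move=> sigma; rewrite !r2_reindex invgK.
by apply: (part2 (A01 p) (A01 _) _ (Ccard _)) => i j h; apply: Bband.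
Qed.
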